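(* Let $\mathcal X$ be a finite abelian group, $\mathcal Z$ a finite set, $P_{XZ}$ a distribution on $\mathcal X\times\mathcal Z$ and $W_{XZ|X}(x,z|x'):=P_{XZ}(x-x',z)$. For any finite set $\mathcal M$, distribution $P_M$ on $\mathcal M$, distribution $Q_Z$ on $\mathcal Z$ and constant $c>0$, \[ P_{js}(P_M,W_{XZ|X})\ge\sum_{\substack{(m,x,z):\\ P_M(m)P_{XZ}(x,z)\le \frac{c}{|\mathcal X|}Q_Z(z)}}P_M(m)P_{XZ}(x,z)\;-\;c. \]
   Context: A code $\phi=(\mathsf e,\mathsf d)$ consists of $\mathsf e:\mathcal M\to\mathcal X$ and $\mathsf d:\mathcal X\times\mathcal Z\to\mathcal M$; $P_{js}[\phi|P_M,W]:=\sum_mP_M(m)W(\{y:\mathsf d(y)\ne m\}|\mathsf e(m))$, and $P_{js}(P_M,W):=\inf_\phi P_{js}[\phi|P_M,W]$. *)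

(* Defs.v *)
From HB Require Import structures.
From mathcomp Require Import all_boot all_order all_algebra.
Set Implicit Arguments. Unset Strict Implicit. Unset Printing Implicit Defensive.
Import Order.TTheory GRing.Theory Num.Theory.
Local Open Scope ring_scope.

Definition is_dist (R : realFieldType) (T : finType) (P : T -> R) : Prop :=
  (forall t, 0 <= P t) /\ \sum_(t : T) P t = 1.

Definition code (M X Y : finType) : finType :=
  ({ffun M -> X} * {ffun Y -> M})%type.

(* P_js[phi | P_M, W] = sum_m P_M(m) W({y : d y <> m} | e m),
   where W x y is the transition probability W(y|x). *)
Definition Perr (R : realFieldType) (M X Y : finType)
    (phi : code M X Y) (PM : M -> R) (W : X -> Y -> R) : R :=
  \sum_(m : M) PM m * \sum_(y : Y | phi.2 y != m) W (phi.1 m) y.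

(* P_js(P_M, W) = inf over all codes; the set of codes is finite, so the
   infimum is a minimum.  The neutral element 1 is harmless: every error
   probability is <= 1 when P_M and W(.|x) are distributions. *)
Definition Pjs (R : realFieldType) (M X Y : finType)
    (PM : M -> R) (W : X -> Y -> R) : R :=
  \big[Num.min/1]_(phi : code M X Y) Perr phi PM W.

(* Main.v *)
Require Import Defs.
From HB Require Import structures.
From mathcomp Require Import all_boot all_order all_algebra.
Import Order.TTheory GRing.Theory Num.Theory.
Local Open Scope ring_scope.
Lemma split3 (R : realFieldType) (X Z M : finType) (H : M * X * Z -> R) :
  \sum_(t : M * X * Z) H t = \sum_(m : M) \sum_(y : X * Z) H (m, y.1, y.2).
Proof.
transitivity (\sum_(mx : M * X) \sum_(z : Z) H (mx, z)).
  rewrite (pair_bigA _ (fun mx z => H (mx, z))).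
  by apply: eq_bigr => -[].
transitivity (\sum_(m : M) \sum_(x : X) \sum_(z : Z) H (m, x, z)).
  rewrite (pair_bigA _ (fun m x => \sum_(z : Z) H (m, x, z))).
  by apply: eq_bigr => -[].
apply: eq_bigr => m _.
rewrite (pair_bigA _ (fun x z => H (m, x, z))).
by apply: eq_bigr => -[].
Qed.

Theorem mainTheorem7 (R : realFieldType) (X : finZmodType) (Z M : finType)
    (PXZ : X * Z -> R) (PM : M -> R) (QZ : Z -> R) (c : R) :
  is_dist PXZ -> is_dist PM -> is_dist QZ -> 0 < c ->
  Pjs PM (fun (x' : X) (xz : X * Z) => PXZ (xz.1 - x', xz.2))
  >= \sum_(t : M * X * Z |
             PM t.1.1 * PXZ (t.1.2, t.2) <= c / #|X|%:R * QZ t.2)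
        PM t.1.1 * PXZ (t.1.2, t.2) - c.
Proof.
move=> [PXZ0 PXZ1] [PM0 PM1] [QZ0 QZ1] c0.
set S := \sum_(t | _) _.
have f0 : forall t : M * X * Z, 0 <= PM t.1.1 * PXZ (t.1.2, t.2).
  by move=> t; rewrite mulr_ge0.
have cardX : (0 < #|X|)%N by apply/card_gt0P; exists 0.
have g0 : forall z, 0 <= c / #|X|%:R * QZ z.
  by move=> z; rewrite mulr_ge0 // divr_ge0 // ltW.
rewrite /Pjs; apply: (big_ind (fun x => S - c <= x)).
- have -> : (1 : R) = \sum_(t : M * X * Z) PM t.1.1 * PXZ (t.1.2, t.2).
    have E : \sum_(y : X * Z) PXZ (y.1, y.2) = 1.
      by rewrite -PXZ1; apply: eq_bigr => -[].
    rewrite split3 -PM1; apply: eq_bigr => m _ /=.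
    by rewrite -mulr_sumr E mulr1.
  have HS : S <= \sum_(t : M * X * Z) PM t.1.1 * PXZ (t.1.2, t.2).
    rewrite /S big_mkcond /=; apply: ler_sum => t _; case: ifP => // _.
  by rewrite lerBlDr (le_trans HS) // lerDl ltW.
- by move=> x y Hx Hy; rewrite le_min Hx Hy.
move=> phi _.
set e := phi.1; set d := phi.2.
have Hperr : Perr phi PM (fun (x' : X) (xz : X * Z) => PXZ (xz.1 - x', xz.2)) =
   \sum_(t : M * X * Z) (if d (t.1.2, t.2) != t.1.1
        then PM t.1.1 * PXZ (t.1.2 - e t.1.1, t.2) else 0).
  rewrite split3 /Perr; apply: eq_bigr => m _.
  rewrite big_mkcond mulr_sumr; apply: eq_bigr => -[x z] _ /=.
  by case: ifP; rewrite ?mulr0.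
have Hg : \sum_(t : M * X * Z) (if d (t.1.2, t.2) == t.1.1
        then c / #|X|%:R * QZ t.2 else 0) = c.
  rewrite split3 exchange_big /=.
  transitivity (\sum_(y : X * Z) c / #|X|%:R * QZ y.2).
    apply: eq_bigr => -[x z] _ /=.
    rewrite -big_mkcond /=.
    by rewrite (eq_bigl (fun m => m == d (x, z))) ?big_pred1_eq // => m; rewrite eq_sym.
  transitivity (\sum_(x : X) \sum_(z : Z) c / #|X|%:R * QZ z).
    rewrite (pair_bigA _ (fun (x : X) (z : Z) => c / #|X|%:R * QZ z)).
    by apply: eq_bigr => -[].
  under eq_bigr do rewrite -mulr_sumr QZ1 mulr1.
  rewrite sumr_const -(mulr_natr (c / _)) divfK // pnatr_eq0 -lt0n //.
rewrite Hperr lerBlDr -Hg -big_split /=.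
rewrite /S big_mkcond /=.
rewrite (reindex_inj (h := fun t : M * X * Z => (t.1.1, t.1.2 - e t.1.1, t.2))) /=; last first.
  move=> [[m1 x1] z1] [[m2 x2] z2] /= [-> H ->]; congr (_, _, _).
  exact: (addIr _ H).
apply: ler_sum => -[[m x] z] _ /=.
rewrite -/e; have fp := f0 (m, x - e m, z); have gp := g0 z; simpl in fp.
case: (eqVneq (d (x, z)) m) => D; rewrite ?D ?eqxx ?(negbTE D) /=;
  case: ifP => A; rewrite ?add0r ?addr0 //.
Qed.
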